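(* Let $G$ be a finite connected unweighted graph with graph distance $d$, and let $\delta$ be its four-points hyperbolicity constant. Then there exist four vertices $u_1,u_2,u_3,u_4$ such that $$d(u_1,u_3)+d(u_2,u_4)=\max\{d(u_1,u_2)+d(u_3,u_4),\ d(u_1,u_4)+d(u_2,u_3)\}+2\delta,$$ and such that for every $i\in\{1,2,3,4\}$ and every neighbor $w$ of $u_i$ we have $d(w,u_{i+2})\le d(u_i,u_{i+2})$, where indices are taken modulo $4$.
   Context: The four-points hyperbolicity constant of $G$ is the smallest $\delta\ge0$ such that for all vertices $a,b,c,e$: $d(a,b)+d(c,e)\le\max\{d(a,c)+d(b,e),\ d(a,e)+d(b,c)\}+2\delta$. *)

(* Defs.v *)
From mathcomp Require Import all_boot all_order all_algebra.
Set Implicit Arguments. Unset Strict Implicit. Unset Printing Implicit Defensive.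
Import Order.TTheory GRing.Theory Num.Theory.

Section Graph.
Variables (T : finType) (e : rel T).

Definition simple_graph : Prop := symmetric e /\ irreflexive e.

Definition connected_graph : Prop := forall x y : T, connect e x y.

Fixpoint ball (k : nat) (x : T) : {set T} :=
  match k with
  | 0 => [set x]
  | k'.+1 => ball k' x :|: [set y | [exists z in ball k' x, e z y]]
  end.

(* Graph distance: least k with y \in ball k x (k ranges over 0..#|T|-1,
   which suffices in a connected graph; returns #|T| if y is unreachable). *)
Definition gdist (x y : T) : nat :=
  find (fun k => y \in ball k x) (iota 0 #|T|).

Definition four_point (R : realFieldType) (delta : R) : Prop :=
  forall a b c f : T,
    ((gdist a b + gdist c f)%:R <=
      Num.max ((gdist a c + gdist b f)%:R) ((gdist a f + gdist b c)%:R)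
      + 2 * delta)%R.

Definition hyp_const (R : realFieldType) (delta : R) : Prop :=
  (0 <= delta)%R /\ four_point delta /\
  (forall d' : R, (0 <= d')%R -> four_point d' -> (delta <= d')%R).

End Graph.

(* Main.v *)
Require Import Defs.
From mathcomp Require Import all_boot all_order all_algebra.
From mathcomp Require Import zify ring lra.
Set Implicit Arguments. Unset Strict Implicit.
Import Order.TTheory GRing.Theory Num.Theory.

Lemma ball_center (T : finType) (e : rel T) k x : x \in ball e k x.
Proof. elim: k => [|k IH] /=; first by rewrite inE. by rewrite in_setU IH. Qed.

Lemma ball_le (T : finType) (e : rel T) k x y :
  y \in ball e k x -> y \in ball e k.+1 x.
Proof. by move=> H /=; rewrite in_setU H. Qed.

Lemma ball_edge (T : finType) (e : rel T) k x y w :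
  y \in ball e k x -> e y w -> w \in ball e k.+1 x.
Proof.
move=> H E /=; rewrite in_setU; apply/orP; right; rewrite inE.
by apply/existsP; exists y; rewrite H.
Qed.

Lemma ball_add (T : finType) (e : rel T) k l x y z :
  z \in ball e k x -> y \in ball e l z -> y \in ball e (k + l) x.
Proof.
move=> Hz; elim: l y => [|l IH] y /=.
  by rewrite inE => /eqP ->; rewrite addn0.
rewrite addnS in_setU => /orP [H|]; first by apply: ball_le; apply: IH.
rewrite inE => /existsP [w /andP [Hw Ew]].
exact: (ball_edge (IH _ Hw) Ew).
Qed.

Lemma ball_sym (T : finType) (e : rel T) (Hs : symmetric e) k x y :
  y \in ball e k x -> x \in ball e k y.
Proof.
elim: k x y => [|k IH] x y /=.
  by rewrite !inE => /eqP ->.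
rewrite in_setU => /orP [H|]; first by rewrite in_setU IH.
rewrite inE => /existsP [z /andP [Hz Ez]].
have H1 : z \in ball e 1%N y by apply: (ball_edge (ball_center e 0 y)); rewrite Hs.
by have := ball_add H1 (IH _ _ Hz).
Qed.

Lemma gdist_max (T : finType) (e : rel T) x y : (gdist e x y <= #|T|)%N.
Proof. by rewrite /gdist; have := find_size (fun k => y \in ball e k x) (iota 0 #|T|); rewrite size_iota. Qed.

Lemma gdist_le (T : finType) (e : rel T) k x y :
  y \in ball e k x -> (gdist e x y <= k)%N.
Proof.
move=> H; case: (leqP #|T| k) => Hk.
  by apply: leq_trans (gdist_max _ _ _) Hk.
rewrite leqNgt; apply/negP => /(before_find 0).
by rewrite nth_iota // add0n H.
Qed.

Lemma gdist_ball (T : finType) (e : rel T) x y :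
  (gdist e x y < #|T|)%N -> y \in ball e (gdist e x y) x.
Proof.
move=> H.
have Hh : has (fun k => y \in ball e k x) (iota 0 #|T|).
  by rewrite has_find size_iota.
have := nth_find 0 Hh.
by rewrite nth_iota // add0n.
Qed.

Lemma gdist_sym (T : finType) (e : rel T) (Hs : symmetric e) x y :
  gdist e x y = gdist e y x.
Proof.
rewrite /gdist; apply: eq_find => k.
by apply/idP/idP; apply: ball_sym.
Qed.

Lemma gdist_edge (T : finType) (e : rel T) x y w :
  e y w -> (gdist e x w <= (gdist e x y).+1)%N.
Proof.
move=> E; case: (ltnP (gdist e x y) #|T|) => H.
  by apply: gdist_le; apply: (ball_edge (gdist_ball H)).
by apply: leq_trans (gdist_max _ _ _) _; apply: leq_trans H _.
Qed.

Lemma gdist_xx (T : finType) (e : rel T) x : gdist e x x = 0%N.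
Proof. by apply/eqP; rewrite -leqn0; apply: gdist_le (ball_center _ _ _). Qed.

Local Open Scope ring_scope.
Lemma max_natr (R : realFieldType) (m n : nat) :
  Num.max (m%:R : R) n%:R = (maxn m n)%:R.
Proof.
case: (leqP m n) => H.
  by rewrite max_r ?ler_nat // (maxn_idPr H).
by rewrite max_l ?ler_nat ?(ltnW H) // (maxn_idPl (ltnW H)).
Qed.

Theorem mainTheorem5 (R : realFieldType) (T : finType) (e : rel T)
  (x0 : T) (Hsimple : simple_graph e) (Hconn : connected_graph e)
  (delta : R) (Hdelta : hyp_const e delta) :
  exists u1 u2 u3 u4 : T,
    (gdist e u1 u3 + gdist e u2 u4)%:R =
      Num.max ((gdist e u1 u2 + gdist e u3 u4)%:R)
              ((gdist e u1 u4 + gdist e u2 u3)%:R) + 2 * delta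
    /\ (forall w, e u1 w -> (gdist e w u3 <= gdist e u1 u3)%N)
    /\ (forall w, e u2 w -> (gdist e w u4 <= gdist e u2 u4)%N)
    /\ (forall w, e u3 w -> (gdist e w u1 <= gdist e u3 u1)%N)
    /\ (forall w, e u4 w -> (gdist e w u2 <= gdist e u4 u2)%N).
Proof.
have Hs : symmetric e := Hsimple.1.
set d := gdist e.
have dxx : forall x, d x x = 0%N by move=> x; apply: gdist_xx.
have dsym : forall x y, d x y = d y x by move=> x y; apply: gdist_sym.
have dmax : forall x y, (d x y <= #|T|)%N by move=> x y; apply: gdist_max.
have dedge : forall x y w, e y w -> (d w x <= (d y x).+1)%N.
  by move=> x y w E; rewrite dsym (dsym y); apply: gdist_edge.
have fp : forall a b c f, (d a b + d c f)%:R <= Num.max (d a c + d b f)%:R (d a f + d b c)%:R + 2 * delta :> R.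
  by move=> a b c f; exact: Hdelta.2.1.
have hmin : forall d' : R, 0 <= d' -> (forall a b c f, (d a b + d c f)%:R <= Num.max (d a c + d b f)%:R (d a f + d b c)%:R + 2 * d' :> R) -> delta <= d'.
  by move=> d' h1 h2; apply: Hdelta.2.2.
clearbody d.
set K := (2 * #|T|)%N.
pose S1 (q : T * T * T * T) := (d q.1.1.1 q.1.2 + d q.1.1.2 q.2)%N.
pose M (q : T * T * T * T) :=
  maxn (d q.1.1.1 q.1.1.2 + d q.1.2 q.2) (d q.1.1.1 q.2 + d q.1.1.2 q.1.2).
pose V q := (S1 q + K - M q)%N.
have MK : forall q, (M q <= K)%N.
  move=> [[[a b] c] f]; rewrite /M /K /=.
  have := dmax a b; have := dmax c f; have := dmax a f; have := dmax b c;
  move: (d a b) (d c f) (d a f) (d b c) => x1 x2 x3 x4; move: #|T| => n; clear; lia.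
have VE : forall q, (V q + M q = S1 q + K)%N.
  move=> q; have := MK q; rewrite /V; lia.
pose q0 := (x0, x0, x0, x0).
have V0 : V q0 = K.
  rewrite /V /S1 /M /=. by rewrite !dxx addn0 add0n maxnn subn0.
case: (@arg_maxnP _ q0 xpredT V isT) => qs _ Hqs.
set m := V qs.
have Vm : forall q, (V q <= m)%N by move=> q; apply: Hqs.
have Km : (K <= m)%N by rewrite -V0 Vm.
have e2d : 2 * delta = m%:R - K%:R.
  apply/eqP; rewrite eq_le; apply/andP; split.
    have H := hmin ((m%:R - K%:R) / 2).
    have H0 : 0 <= ((m%:R - K%:R) / 2 : R).
      by rewrite divr_ge0 // subr_ge0 ler_nat.
    have : delta <= (m%:R - K%:R) / 2.
      apply: H => // a b c f.
      rewrite max_natr.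
      have h := Vm (a, c, b, f); have h2 := VE (a, c, b, f).
      rewrite /S1 /M /= in h h2; rewrite (dsym c b) in h2.
      have : ((d a b + d c f + K)%:R <= (maxn (d a c + d b f) (d a f + d b c) + m)%:R :> R).
        by rewrite ler_nat; lia.
      rewrite !natrD; lra.
    lra.
  have [a [b [c [f Eq]]]] : exists a b c f, qs = (a, b, c, f).
    by case: (qs) => [[[a b] c] f]; exists a, b, c, f.
  have h := fp a c b f; have h2 := VE qs.
  rewrite -/m Eq /S1 /M /= in h2; rewrite max_natr (dsym c b) in h.
  have : ((d a c + d b f + K)%:R = (maxn (d a b + d c f) (d a f + d b c) + m)%:R :> R).
    by rewrite -h2 addnC.
  rewrite !natrD; lra.
pose P q := V q == m.
case: (@arg_maxnP _ qs P S1 (eqxx _)) => q' /eqP Pq' Hq'.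
have key : forall q, V q = m -> (S1 q <= S1 q')%N.
  by move=> q h; apply: Hq'; rewrite /P h.
have [u1 [u2 [u3 [u4 Eq]]]] : exists a b c f, q' = (a, b, c, f).
  by case: (q') => [[[a b] c] f]; exists a, b, c, f.
have h2 := VE q'; rewrite Pq' Eq /S1 /M /= in h2.
have keyE := key; rewrite Eq /S1 /= in keyE.
clearbody V m K.
exists u1, u2, u3, u4; split.
  rewrite max_natr e2d.
  have : ((d u1 u3 + d u2 u4 + K)%:R = (maxn (d u1 u2 + d u3 u4) (d u1 u4 + d u2 u3) + m)%:R :> R).
    by rewrite -h2 addnC.
  rewrite !natrD; lra.
have sy := dsym.
split.
  move=> w E; rewrite leqNgt; apply/negP => Hgt.
  pose q2 := (w, u2, u3, u4).
  have a1 := VE q2; have a2 := MK q2; have a3 := Vm q2.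
  rewrite /S1 /M /= in a1 a2.
  have b1 := dedge u2 u1 w E; have b2 := dedge u4 u1 w E.
  have Veq : V q2 = m by lia.
  have := keyE _ Veq; rewrite /S1 /=; lia.
split.
  move=> w E; rewrite leqNgt; apply/negP => Hgt.
  pose q2 := (u1, w, u3, u4).
  have a1 := VE q2; have a2 := MK q2; have a3 := Vm q2.
  rewrite /S1 /M /= in a1 a2.
  have b1 := dedge u1 u2 w E; have b2 := dedge u3 u2 w E.
  rewrite (sy w u1) (sy u2 u1) in b1.
  have Veq : V q2 = m by lia.
  have := keyE _ Veq; rewrite /S1 /=; lia.
split.
  move=> w E; rewrite leqNgt; apply/negP => Hgt.
  pose q2 := (u1, u2, w, u4).
  have a1 := VE q2; have a2 := MK q2; have a3 := Vm q2.
  rewrite /S1 /M /= in a1 a2.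
  have b1 := dedge u4 u3 w E; have b2 := dedge u2 u3 w E.
  rewrite (sy w u2) (sy u3 u2) in b2.
  rewrite (sy u3 u1) (sy w u1) in Hgt.
  have Veq : V q2 = m by lia.
  have := keyE _ Veq; rewrite /S1 /=; lia.
move=> w E; rewrite leqNgt; apply/negP => Hgt.
pose q2 := (u1, u2, u3, w).
have a1 := VE q2; have a2 := MK q2; have a3 := Vm q2.
rewrite /S1 /M /= in a1 a2.
have b1 := dedge u3 u4 w E; have b2 := dedge u1 u4 w E.
rewrite (sy w u3) (sy u4 u3) in b1; rewrite (sy w u1) (sy u4 u1) in b2.
rewrite (sy u4 u2) (sy w u2) in Hgt.
have Veq : V q2 = m by lia.
have := keyE _ Veq; rewrite /S1 /=; lia.
Qed.
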